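(* Let $\Sigma\in\mathbb C^{L_T\times L_T}$ be positive semidefinite and let $M\ge\mathrm{Rank}(\Sigma)$ be an integer. Then there exist unit-norm vectors $t_1,\dots,t_M\in\mathbb C^{L_T}$ and powers $p_1,\dots,p_M$ with $\Sigma=\sum_{m=1}^M p_mt_mt_m^\dagger$ and $p_m=\mathrm{Tr}(\Sigma)/M$ for all $m$; i.e. uniform power allocation over the streams of a link loses no optimality. *)

(* Defs.v *)
From HB Require Import structures.
From mathcomp Require Import all_boot all_order all_algebra all_field.
Set Implicit Arguments. Unset Strict Implicit. Unset Printing Implicit Defensive.
Import Order.TTheory GRing.Theory Num.Theory.
Local Open Scope ring_scope.

Definition adjmx (m n : nat) (A : 'M[algC]_(m, n)) : 'M[algC]_(n, m) :=
  (map_mx (@Num.conj_op algC) A)^T.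

Definition psdmx (n : nat) (A : 'M[algC]_n) : Prop :=
  adjmx A = A /\ forall v : 'cV[algC]_n, 0 <= (adjmx v *m A *m v) 0 0.

(* Main.v *)
Require Import Defs.
From HB Require Import structures.
From mathcomp Require Import all_boot all_order all_algebra all_field.
Import Order.TTheory GRing.Theory Num.Theory.
Set Implicit Arguments. Unset Strict Implicit. Unset Printing Implicit Defensive.
Local Open Scope ring_scope.
Set Warnings "-notation-overridden,-ambiguous-paths,-deprecated".
Local Open Scope sesquilinear_scope.



Lemma adj_mul {C : numClosedFieldType} m n p (A : 'M[C]_(m, n)) (B : 'M[C]_(n, p)) :
  (A *m B)^t* = B^t* *m A^t*.
Proof. by rewrite trmx_mul map_mxM. Qed.

Lemma adjZC {C : numClosedFieldType} m n a (A : 'M[C]_(m, n)) : (a *: A)^t* = a^* *: A^t*.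
Proof. by apply/matrixP => i j; rewrite !mxE rmorphM. Qed.

Lemma mulmx_cols {C : numClosedFieldType} m n p (A : 'M[C]_(m, n)) (B : 'M[C]_(n, p)) :
  A *m B = \sum_(k < n) col k A *m row k B.
Proof.
apply/matrixP => i j; rewrite !mxE summxE; apply: eq_bigr => k _.
by rewrite !mxE big_ord1 !mxE.
Qed.

Lemma col_adj {C : numClosedFieldType} m n (A : 'M[C]_(m, n)) k : (col k A)^t* = row k (A^t*).
Proof. by apply/matrixP => i j; rewrite !mxE. Qed.

Lemma norm_cV {C : numClosedFieldType} n (c : 'cV[C]_n) : (c^t* *m c) 0 0 = \sum_i `|c i 0| ^+ 2.
Proof. by rewrite mxE; apply: eq_bigr => i _; rewrite !mxE normCKC. Qed.

Lemma norm_cV_ge0 {C : numClosedFieldType} n (c : 'cV[C]_n) : 0 <= (c^t* *m c) 0 0.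
Proof. by rewrite norm_cV sumr_ge0 // => i _; rewrite exprn_ge0. Qed.

Lemma norm_cV_eq0 {C : numClosedFieldType} n (c : 'cV[C]_n) : ((c^t* *m c) 0 0 == 0) = (c == 0).
Proof.
rewrite norm_cV; apply/idP/eqP => [/eqP H|->]; last first.
  by apply/eqP; rewrite big1 // => i _; rewrite mxE normr0 expr0n.
apply/matrixP => i j; rewrite ord1 mxE.
have := psumr_eq0P (fun i _ => exprn_ge0 2 (normr_ge0 (c i 0))) H (isT : true).
by move/(_ i)/eqP; rewrite sqrf_eq0 normr_eq0 => /eqP.
Qed.



Lemma conj_root {C : numClosedFieldType} (w : C) M : (0 < M)%N -> w ^+ M = 1 -> w^* * w = 1.
Proof.
move=> M0 wM; have : `|w| ^+ M == 1 by rewrite -normrX wM normr1.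
by rewrite pexpr_eq1 // => /eqP h; rewrite -normCKC h expr1n.
Qed.

Lemma conj_pow {C : numClosedFieldType} (w : C) n : w^* * w = 1 -> w^* ^+ n * w ^+ n = 1.
Proof. by move=> h; rewrite -exprMn h expr1n. Qed.

Lemma dft_term {C : numClosedFieldType} (w r : C) (a b j : nat) : r^* = r ->
  (w ^+ (a * j) * r) * (w ^+ (b * j) * r)^* = (w ^+ a * w^* ^+ b) ^+ j * (r * r).
Proof.
move=> h; rewrite rmorphM /= rmorphXn /= h mulrACA; congr (_ * _).
by rewrite exprMn -!exprM.
Qed.

Lemma root_powM {C : numClosedFieldType} (w : C) M a b : w ^+ M = 1 -> (w ^+ a * w^* ^+ b) ^+ M = 1.
Proof.
move=> h; rewrite exprMn -!exprM !(mulnC _ M) !exprM h -rmorphXn h rmorph1.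
by rewrite !expr1n mulr1.
Qed.

Lemma root_eq {C : numClosedFieldType} (w : C) a b : w^* * w = 1 -> w ^+ a * w^* ^+ b = 1 -> w ^+ a = w ^+ b.
Proof.
move=> cw zE; have : (w ^+ a * w^* ^+ b) * w ^+ b = w ^+ b by rewrite zE mul1r.
by rewrite -mulrA conj_pow // mulr1.
Qed.

Definition dft {C : numClosedFieldType} M (w : C) : 'M[C]_M :=
  \matrix_(a < M, j < M) (w ^+ (a * j) * (sqrtC M%:R)^-1).

Lemma rr_conj {C : numClosedFieldType} M : ((sqrtC M%:R)^-1)^* = (sqrtC M%:R)^-1 :> C.
Proof. by rewrite geC0_conj // invr_ge0 sqrtC_ge0 ler0n. Qed.

Lemma rr_sq {C : numClosedFieldType} M : (sqrtC M%:R)^-1 * (sqrtC M%:R)^-1 = (M%:R)^-1 :> C.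
Proof. by rewrite -invfM -expr2 sqrtCK. Qed.

Lemma dft_entry {C : numClosedFieldType} M (w : C) a j : (0 < M)%N -> M.-primitive_root w ->
  (dft M w a j)^* * dft M w a j = (M%:R)^-1.
Proof.
move=> M0 pw; rewrite mxE rmorphM /= rr_conj rmorphXn /= mulrACA.
by rewrite conj_pow ?(conj_root M0 (prim_expr_order pw)) // mul1r rr_sq.
Qed.

Lemma dft_unitary {C : numClosedFieldType} M (w : C) : (0 < M)%N -> M.-primitive_root w ->
  dft M w *m (dft M w)^t* = 1%:M.
Proof.
move=> M0 pw; have cw := conj_root M0 (prim_expr_order pw).
apply/matrixP => a b; rewrite !mxE.
under eq_bigr => j _ do rewrite !mxE dft_term ?rr_conj // rr_sq.
rewrite -mulr_suml.
have [<-|nab] := eqVneq a b.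
  have -> : w ^+ a * w^* ^+ a = 1 by rewrite mulrC conj_pow.
  under eq_bigr do rewrite expr1n.
  by rewrite sumr_const card_ord divff // pnatr_eq0 -lt0n.
set z := w ^+ a * w^* ^+ b.
have zM : z ^+ M = 1.
  by apply: root_powM; exact: prim_expr_order pw.
have z1 : z != 1.
  apply: contra nab => /eqP zE; have := root_eq cw zE => /eqP.
  by rewrite (eq_prim_root_expr pw) !modn_small.
have : (z - 1) * (\sum_(i < M) z ^+ i) = 0 by rewrite -subrX1 zM subrr.
by move/eqP; rewrite mulf_eq0 subr_eq0 (negPf z1) /= => /eqP->; rewrite mul0r.
Qed.




Definition sel {C : numClosedFieldType} n (s : seq 'I_n) (i0 : 'I_n) N : 'M[C]_(N, n) :=
  \matrix_(a < N, i < n) ((a < size s)%N && (i == nth i0 s a))%:R.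

Lemma sel_diag {C : numClosedFieldType} n (s : seq 'I_n) (i0 : 'I_n) (us : uniq s) N (e : 'rV[C]_n) :
  @sel C _ s i0 N *m diag_mx e *m (@sel C _ s i0 N)^T =
  diag_mx (\row_(a < N) ((a < size s)%N%:R * e 0 (nth i0 s a))).
Proof.
rewrite /sel mul_mx_diag; apply/matrixP => a b; rewrite !mxE.
have [ak|ak] := boolP (a < size s)%N; last first.
  rewrite mul0r mul0rn big1 // => i _; rewrite !mxE (negPf ak) /= mul0r mul0r //.
rewrite (bigD1 (nth i0 s a)) //= big1 ?addr0; last first.
  by move=> i /negPf ni; rewrite !mxE ak ni /= !mul0r.
rewrite !mxE ak eqxx /= !mul1r.
have [<-|nab] := eqVneq a b; first by rewrite ak eqxx mulr1.
rewrite mulr0n; have [bk|bk] := boolP (b < size s)%N; last by rewrite mulr0.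
by rewrite nth_uniq //; move: nab; rewrite -val_eqE => /negPf ->; rewrite mulr0.
Qed.

Lemma sel_trsel {C : numClosedFieldType} n (s : seq 'I_n) (i0 : 'I_n) (us : uniq s) N : (size s <= N)%N ->
  (@sel C _ s i0 N)^T *m @sel C _ s i0 N = diag_mx (\row_(i < n) (i \in s)%:R).
Proof.
move=> kN; apply/matrixP => i j; rewrite /sel !mxE.
have [iS|niS] := boolP (i \in s); last first.
  rewrite big1 ?mul0rn // => a _; rewrite !mxE.
  have [ak|ak] := boolP (a < size s)%N; last by rewrite /= mul0r.
  have : (i == nth i0 s a) = false.
    by apply: contraNF niS => /eqP ->; rewrite mem_nth.
  by move=> ->; rewrite mul0r.
have ik : (index i s < N)%N by rewrite (leq_trans _ kN) // index_mem.
rewrite (bigD1 (Ordinal ik)) //= big1 ?addr0; last first.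
  move=> a na; rewrite !mxE.
  have [ak|ak] := boolP (a < size s)%N; last by rewrite /= mul0r.
  have [iE|] := eqVneq i (nth i0 s a); last by rewrite mul0r.
  by move: na; rewrite -val_eqE /= iE index_uniq // eqxx.
rewrite !mxE /= index_mem iS nth_index // eqxx /= mul1r.
by rewrite eq_sym.
Qed.





Definition normalize {C : numClosedFieldType} n (i0 : 'I_n) (p : C) (c : 'cV[C]_n) : 'cV[C]_n :=
  if c == 0 then delta_mx i0 0 else (sqrtC p)^-1 *: c.

Lemma normalizeP {C : numClosedFieldType} n (i0 : 'I_n) p (c : 'cV[C]_n) :
  (c^t* *m c) 0 0 = p ->
  ((normalize i0 p c)^t* *m normalize i0 p c) 0 0 = 1 /\
  p *: (normalize i0 p c *m (normalize i0 p c)^t*) = c *m c^t*.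
Proof.
move=> cp; rewrite /normalize; have [c0|c0] := eqVneq c 0.
  have p0 : p = 0 by apply/eqP; rewrite -cp norm_cV_eq0 c0.
  rewrite c0 p0 scale0r mul0mx; split => //.
  by rewrite trmx_delta map_delta_mx mul_delta_mx mxE !eqxx.
have pgt0 : 0 < p.
  by rewrite lt_def -cp norm_cV_ge0 norm_cV_eq0 c0.
have rc : ((sqrtC p)^-1)^* = (sqrtC p)^-1.
  by rewrite geC0_conj // invr_ge0 sqrtC_ge0 ltW.
have rr : (sqrtC p)^-1 * (sqrtC p)^-1 = p^-1 by rewrite -invfM -expr2 sqrtCK.
have pr : p * p^-1 = 1 by rewrite divff // gt_eqF.
rewrite adjZC rc; split.
  by rewrite -scalemxAl -scalemxAr scalerA mxE rr cp mulrC pr.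
by rewrite -scalemxAl -scalemxAr !scalerA -mulrA rr pr scale1r.
Qed.


Lemma spectral_psd {C : numClosedFieldType} n (S : 'M[C]_n) :
  S^t* = S -> (forall v : 'cV[C]_n, 0 <= (v^t* *m S *m v) 0 0) ->
  exists (W : 'M[C]_n) (d : 'rV[C]_n),
    [/\ W^t* *m W = 1%:M, W *m W^t* = 1%:M, S = W *m diag_mx d *m W^t*
      & forall i, 0 <= d 0 i].
Proof.
move=> herm psd.
have nS : S \is normalmx by apply/normalmxP; rewrite herm.
have SE := orthomx_spectralP nS.
set P := spectralmx S in SE; set d := spectral_diag S in SE.
have Pu : P \is unitarymx by apply: spectral_unitarymx.
rewrite invmx_unitary // in SE.
have h1 : P *m P^t* = 1%:M by apply/unitarymxP.
have h2 : P^t* *m P = 1%:M by apply: mulmx1C.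
exists (P^t*), d; split; rewrite ?trmxCK //.
move=> i; have := psd (P^t* *m delta_mx i 0).
rewrite adj_mul trmxCK SE.
have -> : (delta_mx i 0 : 'cV[C]_n)^t* = delta_mx 0 i.
  by rewrite trmx_delta map_delta_mx.
rewrite !mulmxA -(mulmxA _ P) h1 mulmx1 -(mulmxA _ P) h1 mulmx1.
rewrite -rowE row_diag_mx -scalemxAl mul_delta_mx mxE mxE eqxx mulr1.
by [].
Qed.

Lemma main_gen {C : numClosedFieldType} (LT : nat) (S : 'M[C]_LT) (M : nat) :
  (0 < LT)%N -> S^t* = S -> (forall v : 'cV[C]_LT, 0 <= (v^t* *m S *m v) 0 0) ->
  (\rank S <= M)%N -> (forall M, (0 < M)%N -> exists w : C, M.-primitive_root w) ->
  exists (t : 'I_M -> 'cV[C]_LT) (p : 'I_M -> C),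
    (forall m, ((t m)^t* *m t m) 0 0 = 1) /\
    S = \sum_(m < M) p m *: (t m *m (t m)^t*) /\
    (forall m, p m = \tr S / M%:R).
Proof.
move=> LT0 herm psd rk prim.
have [W [d [hWW hWW' SE dge0]]] := spectral_psd herm psd.
set s := [seq i <- enum 'I_LT | d 0 i != 0].
have us : uniq s by rewrite filter_uniq // enum_uniq.
pose i0 := Ordinal LT0.
have ds i : (i \in s) = (d 0 i != 0) by rewrite mem_filter mem_enum andbT.
have kM : (size s <= M)%N.
  have D_S : diag_mx d = W^t* *m S *m W.
    by rewrite SE !mulmxA hWW mul1mx -mulmxA hWW mulmx1.
  have rD : (\rank (diag_mx d) <= \rank S)%N.
    by rewrite D_S; exact: leq_trans (mxrankM_maxl _ _) (mxrankM_maxr _ _).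
  have rsel : \rank (@sel C _ s i0 (size s) *m diag_mx d *m (@sel C _ s i0 (size s))^T)
      = size s.
    rewrite sel_diag //; apply: mxrank_unit; rewrite unitmxE det_diag unitfE.
    by apply/prodf_neq0 => a _; rewrite mxE ltn_ord mul1r -ds mem_nth.
  rewrite -rsel; apply: leq_trans rk; apply: leq_trans rD.
  exact: leq_trans (mxrankM_maxl _ _) (mxrankM_maxr _ _).
have [F [FF Fe]] : exists F : 'M[C]_M,
    F *m F^t* = 1%:M /\ forall a j, (F a j)^* * F a j = (M%:R)^-1.
  have [M0|Mpos] := posnP M.
    exists 0; split; last by move=> a; have := ltn_ord a; rewrite {2}M0.
    by apply/matrixP => a; have := ltn_ord a; rewrite {2}M0.
  have [w pw] := prim M Mpos.
  by exists (dft M w); split; [exact: dft_unitary | move=> a j; exact: dft_entry].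
pose sq := \row_i sqrtC (d 0 i).
have sqc : (diag_mx sq)^t* = diag_mx sq.
  rewrite tr_diag_mx; apply/matrixP => i j; rewrite !mxE rmorphMn /=.
  by rewrite geC0_conj // sqrtC_ge0 dge0.
have sqsq : diag_mx sq *m diag_mx sq = diag_mx d.
  by rewrite mulmx_diag; congr diag_mx; apply/rowP => i; rewrite !mxE -expr2 sqrtCK.
have selc : ((@sel C _ s i0 M)^T)^t* = @sel C _ s i0 M.
  by rewrite trmxK; apply/matrixP => a i; rewrite !mxE rmorph_nat.
pose U := W *m diag_mx sq *m (@sel C _ s i0 M)^T.
have UU : U *m U^t* = S.
  rewrite /U !adj_mul selc sqc mulmxA -(mulmxA (W *m diag_mx sq)) sel_trsel //.
  rewrite SE !mulmxA; congr (_ *m _); rewrite -!mulmxA; congr (_ *m _).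
  rewrite !mulmx_diag; congr diag_mx; apply/rowP => i; rewrite !mxE.
  have [iS|niS] := boolP (i \in s); first by rewrite /= mul1r -expr2 sqrtCK.
  by move: niS; rewrite ds negbK => /eqP ->; rewrite sqrtC0 !mul0r.
have UtU : U^t* *m U = diag_mx (\row_(a < M) ((a < size s)%N%:R * d 0 (nth i0 s a))).
  rewrite /U !adj_mul selc sqc !mulmxA.
  rewrite -(mulmxA (_ *m diag_mx sq)) hWW mulmx1 -(mulmxA (@sel C _ s i0 M)) sqsq.
  exact: sel_diag.
set g := \row_(a < M) _ in UtU.
pose V := U *m F.
have VV : V *m V^t* = S by rewrite /V adj_mul mulmxA -(mulmxA U) FF mulmx1 UU.
have Vjj j : (V^t* *m V) j j = \tr S / M%:R.
  rewrite /V adj_mul mulmxA -(mulmxA _ (U^t*)) UtU -UU mxtrace_mulC UtU.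
  rewrite mxtrace_diag mulr_suml mul_mx_diag mxE; apply: eq_bigr => a _.
  by rewrite !mxE mulrAC Fe mulrC.
pose p := \tr S / M%:R.
have np m := @normalizeP C _ i0 p (col m V).
exists (fun m => normalize i0 p (col m V)), (fun _ => p).
have cp m : ((col m V)^t* *m col m V) 0 0 = p.
  rewrite /p col_adj -(Vjj m) !mxE; apply: eq_bigr => k _; by rewrite !mxE.
split; first by move=> m; case: (np m (cp m)).
split; last by [].
rewrite -VV mulmx_cols; apply: eq_bigr => m _; rewrite -col_adj.
by case: (np m (cp m)) => _ ->.
Qed.



Lemma adjE m n (A : 'M[algC]_(m, n)) : adjmx A = A^t*.
Proof. by rewrite /adjmx map_trmx. Qed.

Lemma theorem5_aux (LT : nat) (Sigma : 'M[algC]_LT) (M : nat) :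
  (0 < LT)%N -> psdmx Sigma -> (\rank Sigma <= M)%N ->
  exists (t : 'I_M -> 'cV[algC]_LT) (p : 'I_M -> algC),
    (forall m, (adjmx (t m) *m t m) 0 0 = 1) /\
    Sigma = \sum_(m < M) p m *: (t m *m adjmx (t m)) /\
    (forall m, p m = \tr Sigma / M%:R).
Proof.
move=> LT0 [herm psd] rk.
have herm' : Sigma^t* = Sigma by rewrite -adjE.
have psd' : forall v : 'cV[algC]_LT, 0 <= (v^t* *m Sigma *m v) 0 0.
  by move=> v; rewrite -adjE; exact: psd.
have prim : forall k, (0 < k)%N -> exists w : algC, k.-primitive_root w.
  by move=> k k0; have [w pw] := C_prim_root_exists k0; exists w.
have [t [p [h1 [h2 h3]]]] := main_gen LT0 herm' psd' rk prim.
exists t, p; split; first by move=> m; rewrite adjE; exact: h1.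
split; last exact: h3.
by rewrite {1}h2; apply: eq_bigr => m _; rewrite adjE.
Qed.

Close Scope sesquilinear_scope.
Unset Implicit Arguments. Set Strict Implicit. Set Printing Implicit Defensive.

Theorem theorem5 (LT : nat) (Sigma : 'M[algC]_LT) (M : nat) :
  (0 < LT)%N -> psdmx Sigma -> (\rank Sigma <= M)%N ->
  exists (t : 'I_M -> 'cV[algC]_LT) (p : 'I_M -> algC),
    (forall m, (adjmx (t m) *m t m) 0 0 = 1) /\
    Sigma = \sum_(m < M) p m *: (t m *m adjmx (t m)) /\
    (forall m, p m = \tr Sigma / M%:R).
Proof. exact: theorem5_aux. Qed.
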